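(* Let $n\ge1$. Then: (1) for a $1$-Lipschitz function $f:S^n\to\mathbb{R}$, we have $f\in E(S^n)$ if and only if $f(x)+f(-x)=\pi$ for all $x\in S^n$; (2) $E(S^n)$ is a compact, convex subset of $\ell_\infty(S^n)$; (3) every $f\in E(S^n)$ takes values in $[0,\pi]$; (4) for $f\in E(S^n)$, we have $f\in E(S^n)\setminus S^n$ if and only if $f$ takes values in $(0,\pi)$.
   Context: $S^n=\{x\in\mathbb{R}^{n+1}:|x|=1\}$ is equipped with its intrinsic geodesic distance $d$. $E(S^n)$ (the injective hull) is the set of $1$-Lipschitz functions $f:S^n\to\mathbb{R}$ satisfying: (i) $d(x,y)\le f(x)+f(y)$ for all $x,y\in S^n$; (ii) for every $x\in S^n$ there exists $y\in S^n$ with $f(x)+f(y)=d(x,y)$. $E(S^n)$ is regarded as a subset of the Banach space $\ell_\infty(S^n)$ of bounded functions with the sup norm. $S^n$ is identified with the subset $\{d_x:x\in S^n\}\subset E(S^n)$, where $d_x(y)=d(x,y)$. *)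

(* Defs.v *)
From HB Require Import structures.
From mathcomp Require Import all_boot all_order all_algebra.
From mathcomp Require Import all_classical all_reals all_analysis.
Set Implicit Arguments. Unset Strict Implicit. Unset Printing Implicit Defensive.
Import Order.TTheory GRing.Theory Num.Theory.
Local Open Scope ring_scope.
Local Open Scope classical_set_scope.

Definition dotp {R : realType} {n : nat} (x y : 'rV[R]_n.+1) : R :=
  \sum_(i < n.+1) x 0 i * y 0 i.

Definition sphere (R : realType) (n : nat) : Type :=
  {x : 'rV[R]_n.+1 | dotp x x == 1}.

HB.instance Definition _ (R : realType) (n : nat) :=
  Choice.on (sphere R n).

Definition sdist {R : realType} {n : nat} (x y : sphere R n) : R :=
  acos (dotp (val x) (val y)).

Lemma dotp_oppr_sphere {R : realType} {n : nat} (x : 'rV[R]_n.+1) :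
  dotp x x == 1 -> dotp (- x) (- x) == 1.
Proof.
rewrite /dotp => /eqP <-; apply/eqP; apply: eq_bigr => i _.
by rewrite !mxE mulrNN.
Qed.

Definition antipode {R : realType} {n : nat} (x : sphere R n) : sphere R n :=
  exist _ (- val x) (dotp_oppr_sphere (valP x)).

Definition dpt {R : realType} {n : nat} (x : sphere R n) : sphere R n -> R :=
  fun y => sdist x y.

Definition lipschitz1 {R : realType} {n : nat} (f : sphere R n -> R) : Prop :=
  forall x y, `|f x - f y| <= sdist x y.

Definition injective_hull (R : realType) (n : nat) : set (sphere R n -> R) :=
  [set f | lipschitz1 f
           /\ (forall x y, sdist x y <= f x + f y)
           /\ (forall x, exists y, f x + f y = sdist x y)].
Arguments injective_hull : clear implicits.

(* Main.v *)
Require Import Defs.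
From HB Require Import structures.
From mathcomp Require Import all_boot all_order all_algebra.
From mathcomp Require Import all_classical all_reals all_analysis.
From mathcomp Require Import ring lra finmap.
Import Order.TTheory GRing.Theory Num.Theory numFieldNormedType.Exports.
Local Open Scope ring_scope.
Local Open Scope classical_set_scope.

Section S.
Variables (R : realType) (n : nat).
Implicit Types (x y z : sphere R n) (a b : 'rV[R]_n.+1).

Lemma dotpC a b : dotp a b = dotp b a.
Proof. by rewrite /dotp; apply: eq_bigr => i _; rewrite mulrC. Qed.

Lemma dotpNr a b : dotp a (- b) = - dotp a b.
Proof.
rewrite /dotp -sumrN; apply: eq_bigr => i _; rewrite !mxE; ring.
Qed.

Lemma dotpNl a b : dotp (- a) b = - dotp a b.
Proof. by rewrite dotpC dotpNr dotpC. Qed.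

Lemma dotp_ge0 a : 0 <= dotp a a.
Proof. by apply: sumr_ge0 => i _; rewrite -expr2 sqr_ge0. Qed.

Lemma dotpBB a b : dotp (a - b) (a - b) = dotp a a + dotp b b - 2 * dotp a b.
Proof.
rewrite /dotp mulr_sumr -big_split -sumrB /=; apply: eq_bigr => i _.
rewrite !mxE; ring.
Qed.

Lemma sphere1 x : dotp (val x) (val x) = 1.
Proof. exact: (eqP (valP x)). Qed.

Lemma dotp_bound x y : -1 <= dotp (val x) (val y) <= 1.
Proof.
have h1 := dotp_ge0 (val x - val y).
have h2 := dotp_ge0 (val x - - val y).
rewrite dotpBB !sphere1 in h1.
rewrite dotpBB dotpNr dotpNl dotpNr opprK !sphere1 in h2.
apply/andP; split; lra.
Qed.

Lemma sdistC x y : sdist x y = sdist y x.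
Proof. by rewrite /sdist dotpC. Qed.

Lemma sdistxx x : sdist x x = 0.
Proof. by rewrite /sdist sphere1 acos1. Qed.

Lemma sdist_antiR x y : sdist x (antipode y) = pi - sdist x y.
Proof. by rewrite /sdist /= dotpNr acosN // dotp_bound. Qed.

Lemma sdist_antiL x y : sdist (antipode x) y = pi - sdist x y.
Proof. by rewrite sdistC sdist_antiR sdistC. Qed.

Lemma sdist_anti x : sdist x (antipode x) = pi.
Proof. by rewrite sdist_antiR sdistxx subr0. Qed.

Lemma sdist_ge0 x y : 0 <= sdist x y.
Proof. exact/acos_ge0/dotp_bound. Qed.

Lemma sdist_lepi x y : sdist x y <= pi.
Proof. exact/acos_lepi/dotp_bound. Qed.

Lemma antipodeK x : antipode (antipode x) = x.
Proof. by apply: val_inj; rewrite /= opprK. Qed.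

Lemma hull_iff (f : sphere R n -> R) : lipschitz1 f ->
  (injective_hull R n f <-> forall x, f x + f (antipode x) = pi).
Proof.
move=> Lf; split.
  move=> [_ [H1 H2]] x; apply/eqP; rewrite eq_le; apply/andP; split; last first.
    by rewrite -(sdist_anti x); apply: H1.
  have [y Hy] := H2 x.
  have := Lf (antipode x) y; rewrite sdist_antiL => /ler_normlP [_ h].
  lra.
move=> H; split => //; split.
  move=> x y; have := Lf x (antipode y); rewrite sdist_antiR => /ler_normlP [h _].
  have := H y; lra.
by move=> x; exists (antipode x); rewrite sdist_anti H.
Qed.

Lemma hull_bound f : injective_hull R n f -> forall x, 0 <= f x <= pi.
Proof.
move=> hf; have [Lf [H1 _]] := hf.
have H := (hull_iff _ Lf).1 hf.
have ge0 : forall x, 0 <= f x by move=> x; have := H1 x x; rewrite sdistxx; lra.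
move=> x; have := ge0 (antipode x); have := ge0 x; have := H x; move=> *.
apply/andP; split; lra.
Qed.

Lemma hull_convex (f g : sphere R n -> R) (t : R) :
  injective_hull R n f -> injective_hull R n g -> 0 <= t <= 1 ->
  injective_hull R n (fun x => t * f x + (1 - t) * g x).
Proof.
move=> hf hg /andP[t0 t1].
have Lf := hf.1; have Lg := hg.1.
have Lh : lipschitz1 (fun x => t * f x + (1 - t) * g x).
  move=> x y.
  have -> : t * f x + (1 - t) * g x - (t * f y + (1 - t) * g y) =
            t * (f x - f y) + (1 - t) * (g x - g y) by ring.
  apply: le_trans (ler_normD _ _) _.
  rewrite !normrM (ger0_norm t0) (ger0_norm (_ : 0 <= 1 - t)); last lra.
  have h1 := Lf x y; have h2 := Lg x y.
  have t1' : 0 <= 1 - t by lra.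
  have := ler_wpM2l t0 h1; have := ler_wpM2l t1' h2; lra.
apply/(hull_iff _ Lh) => x.
have -> : t * f x + (1 - t) * g x + (t * f (antipode x) + (1 - t) * g (antipode x))
  = t * (f x + f (antipode x)) + (1 - t) * (g x + g (antipode x)) by ring.
by rewrite ((hull_iff _ Lf).1 hf x) ((hull_iff _ Lg).1 hg x); ring.
Qed.

Lemma hull_dpt f : injective_hull R n f ->
  ((~ exists x : sphere R n, f = dpt x) <-> forall y, 0 < f y < pi).
Proof.
move=> hf; have [Lf [H1 _]] := hf; have H := (hull_iff _ Lf).1 hf.
have B := hull_bound _ hf.
have key : forall z, f z = 0 -> f = dpt z.
  move=> z fz; apply: funext => w; rewrite /dpt.
  have := Lf w z; rewrite sdistC => /ler_normlP [_ h].
  have := H1 z w; lra.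
split.
  move=> nex y; apply/andP; split.
    rewrite lt_neqAle; have /andP[-> _] := B y; rewrite andbT.
    apply/negP => /eqP fy; apply: nex; exists y; exact: key.
  rewrite lt_neqAle; have /andP[_ ->] := B y; rewrite andbT.
  apply/negP => /eqP fy; apply: nex; exists (antipode y); apply: key.
  have := H y; lra.
move=> pos [x fx]; have := pos x; rewrite fx /dpt sdistxx ltxx //.
Qed.

End S.

Section S2.
Variables (R : realType) (n : nat).
Implicit Types (x y z : sphere R n) (a b : 'rV[R]_n.+1).

Lemma sum_bound {a b : 'rV[R]_n.+1} {e : R} : (forall i, `|a ord0 i - b ord0 i| < e) ->
  dotp (a - b) (a - b) <= (n.+1)%:R * (e * e).
Proof.
move=> h; rewrite /dotp.
apply: le_trans (_ : \sum_(i < n.+1) (e * e) <= _).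
  apply: ler_sum => i _; rewrite !mxE.
  have := h i; rewrite ltr_norml => /andP[h1 h2]; nra.
by rewrite sumr_const card_ord mulr_natl.
Qed.

Lemma close_sdist (d : R) : 0 < d -> exists2 e : R, 0 < e &
  forall x y, (forall i, `|val x ord0 i - val y ord0 i| < e) -> sdist x y < d.
Proof.
move=> d0.
pose d1 := Num.min d pi.
have d10 : 0 < d1 by rewrite lt_min d0 pi_gt0.
have d1pi : d1 <= pi by rewrite ge_min lexx orbT.
have d1d : d1 <= d by rewrite ge_min lexx.
have d1I : d1 \in `[0, pi]%R by rewrite in_itv /= (ltW d10) d1pi.
have I0 : (0:R) \in `[0, pi]%R by rewrite in_itv /= lexx pi_ge0.
have cosd1 : cos d1 < 1.
  have : cos d1 < cos 0 by rewrite ltr_cos.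
  by move=> h; rewrite cos0 in h.
pose eta := 1 - cos d1.
have eta0 : 0 < eta by rewrite /eta subr_gt0.
pose e := Num.min 1 (eta / (n.+1)%:R).
have e0 : 0 < e by rewrite lt_min ltr01 divr_gt0 // ltr0n.
have e1 : e <= 1 by rewrite ge_min lexx.
have e2 : e <= eta / (n.+1)%:R by rewrite ge_min lexx orbT.
exists e => // x y h.
have hb := sum_bound h.
rewrite dotpBB !sphere1 in hb.
have hee : (n.+1)%:R * (e * e) <= eta.
  have : e * e <= eta / (n.+1)%:R by apply: le_trans e2; rewrite ler_piMr // ltW.
  rewrite ler_pdivlMr ?ltr0n // => ?; lra.
have hdot : cos d1 < dotp (val x) (val y) by rewrite /eta in hee; lra.
apply: lt_le_trans d1d.
have hb2 := dotp_bound _ _ x y.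
have aI : acos (dotp (val x) (val y)) \in `[0, pi]%R.
  by rewrite in_itv /= acos_ge0 // acos_lepi.
rewrite /sdist -(ltr_cos aI d1I) acosK //.
Qed.

End S2.

Section S3.
Variables (R : realType) (n : nat).

Lemma sphere_net (d : R) : 0 < d ->
  exists D : {fset sphere R n}, forall x, exists2 s, s \in D & sdist s x < d.
Proof.
move=> d0; have [e e0 He] := @close_sdist R n d d0.
pose K := [set v : 'rV[R]_n.+1 | forall i : 'I_n.+1, `[-1, 1] (v ord0 i)].
have cK : compact K.
  exact: (@rV_compact R n.+1 (fun=> `[-1, 1]) (fun=> @segment_compact _ _ _)).
have clK : closed K by apply: compact_closed => //; exact: norm_hausdorff.
pose S := [set v : 'rV[R]_n.+1 | dotp v v = 1].
have SK : S `<=` K.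
  move=> v Sv i /=; rewrite in_itv /=.
  have : v ord0 i * v ord0 i <= 1.
    rewrite -Sv /dotp (bigD1 i) //= lerDl; apply: sumr_ge0 => j _.
    by rewrite -expr2 sqr_ge0.
  move=> h; apply/andP; split; nra.
have cS : compact (closure S).
  apply: (subclosed_compact _ cK); first exact: closed_closure.
  by rewrite (closure_id K).1 //; apply: closureS.
move: cS; rewrite compact_cover => /(_ (sphere R n) setT
   (fun s => ball (val s) e)).
case.
- by move=> i _; exact: ball_open.
- move=> p clp.
  have [v [Sv bv]] := clp _ (nbhsx_ballx p e e0).
  exists (exist _ v (introT eqP Sv)) => //=.
  exact: ball_sym.
move=> D _ HD; exists D => x.
have : closure S (val x) by apply: subset_closure; exact: (eqP (valP x)).
move=> /HD [s /= sD bs]; exists s => //.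
apply: He => i.
move: bs => [_ /(_ ord0 i)].
by rewrite /ball /=.
Qed.

End S3.

Section S4.
Variables (R : realType) (n : nat).

Lemma hull_compact :
  compact (injective_hull R n : set {uniform sphere R n -> R}).
Proof.
rewrite compact_ultra => U UU UE.
have PU : ProperFilter U by exact: ultra_proper.
have lim_ex : forall x : sphere R n, exists p : R, 0 <= p <= pi /\
    forall e, 0 < e -> U [set f : {uniform sphere R n -> R} | `|p - f x| < e].
  move=> x.
  pose ev := fun f : {uniform sphere R n -> R} => f x.
  have sur : range ev = setT.
    by apply/seteqP; split => // r _; exists (fun=> r).
  have UG := ultra_image UU sur.
  have cS := @segment_compact R 0 pi.
  move: cS; rewrite compact_ultra => /(_ _ UG).
  case.
    apply: (@filterS _ _ (@ultra_proper _ _ UG) (ev @` injective_hull R n)).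
      move=> r [f hf <-]; have := @hull_bound R n _ hf x.
      by rewrite /= in_itv /=.
    by exists (injective_hull R n).
  move=> p [pI cvp]; exists p; split; first by move: pI; rewrite /= in_itv /=.
  move=> e e0.
  have := cvp _ (nbhsx_ballx p e e0).
  move=> [A UA eA].
  apply: filterS UA => f Af.
  have : ball p e (ev f) by rewrite -eA; exists f.
  by rewrite /ball /=.
pose g := fun x => projT1 (cid (lim_ex x)).
have gP : forall x, 0 <= g x <= pi /\
    forall e, 0 < e -> U [set f : {uniform sphere R n -> R} | `|g x - f x| < e].
  by move=> x; rewrite /g; case: cid.
have pick : forall (P : set {uniform sphere R n -> R}), U P ->
    exists f, injective_hull R n f /\ P f.
  move=> P UP; have [f [? ?]] := filter_ex (filterI UE UP); by exists f.
have Lg : lipschitz1 g.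
  move=> x y; apply/ler_addgt0Pr => e e0.
  have e2 : 0 < e / 2 by rewrite divr_gt0.
  have [f [hf [fx fy]]] := pick _ (filterI ((gP x).2 _ e2) ((gP y).2 _ e2)).
  have := hf.1 x y; rewrite /= in fx fy.
  move: fx fy; rewrite !ltr_norml => /andP[? ?] /andP[? ?] /ler_normlP[? ?].
  rewrite ler_norml; apply/andP; split; lra.
have hg : injective_hull R n g.
  apply/(@hull_iff R n _ Lg) => x; apply/eqP; rewrite eq_le; apply/andP; split.
    apply/ler_addgt0Pr => e e0.
    have e2 : 0 < e / 2 by rewrite divr_gt0.
    have [f [hf [fx fy]]] := pick _ (filterI ((gP x).2 _ e2) ((gP (antipode x)).2 _ e2)).
    have := (@hull_iff R n _ hf.1).1 hf x; rewrite /= in fx fy.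
    move: fx fy; rewrite !ltr_norml => /andP[? ?] /andP[? ?] ?; lra.
  rewrite -subr_ge0 -oppr_le0; apply/ler_addgt0Pr => e e0; rewrite add0r.
  have e2 : 0 < e / 2 by rewrite divr_gt0.
  have [f [hf [fx fy]]] := pick _ (filterI ((gP x).2 _ e2) ((gP (antipode x)).2 _ e2)).
  have := (@hull_iff R n _ hf.1).1 hf x; rewrite /= in fx fy.
  move: fx fy; rewrite !ltr_norml => /andP[? ?] /andP[? ?] ?; lra.
exists g; split => //.
move=> P; rewrite uniform_nbhs => -[Ent [entE sub]].
move: entE; rewrite -entourage_ballE => -[e /= e0 subE].
suff HU : U [set h : {uniform sphere R n -> R} | forall y, [set: sphere R n] y -> Ent (g y, h y)].
  exact: (filterS sub HU).
have e3 : 0 < e / 3 by rewrite divr_gt0.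
have [D HD] := @sphere_net R n _ e3.
have UD : U (\bigcap_(s in [set` D]) [set f : {uniform sphere R n -> R} | `|g s - f s| < e / 3]).
  by apply: filter_bigI => s _; exact: (gP s).2.
apply: filterS (filterI UE UD) => f [hf fD] y _.
apply: subE; rewrite /ball /=.
have [s sD ds] := HD y.
have := fD s sD; rewrite /= => fs.
have := Lg s y; have := hf.1 s y.
move: fs; rewrite !ltr_norml => /andP[? ?] /ler_normlP[? ?] /ler_normlP[? ?].
apply/andP; split; lra.
Qed.

End S4.

Theorem proposition2p7 (R : realType) (n : nat) (hn : (1 <= n)%N) :
  (* (1) *)
  (forall f : sphere R n -> R, lipschitz1 f ->
     (injective_hull R n f <-> forall x, f x + f (antipode x) = pi))
  (* (2) compact in the sup-norm topology (= uniform convergence) and convex *)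
  /\ compact (injective_hull R n : set {uniform sphere R n -> R})
  /\ (forall (f g : sphere R n -> R) (t : R),
        injective_hull R n f -> injective_hull R n g -> 0 <= t <= 1 ->
        injective_hull R n (fun x => t * f x + (1 - t) * g x))
  (* (3) *)
  /\ (forall f, injective_hull R n f -> forall x, 0 <= f x <= pi)
  (* (4) *)
  /\ (forall f, injective_hull R n f ->
        ((~ exists x : sphere R n, f = dpt x) <-> forall y, 0 < f y < pi)).
Proof.
split; first exact: hull_iff.
split; first exact: hull_compact.
split; first exact: hull_convex.
split; first exact: hull_bound.
exact: hull_dpt.
Qed.
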